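(* For the $N$-relay 1-2-1 diamond network, in both the FD and HD cases, $\max_{p\in[1:N]}\mathsf C_p\ge\frac12\mathsf{C}_{\rm cs,iid}$ (with $\mathsf C_p$ and $\mathsf{C}_{\rm cs,iid}$ of the corresponding mode). Moreover the constant $\tfrac12$ is best possible in both modes: for every $\varepsilon>0$ there is a diamond network (with $N=2$) such that $\max_p\mathsf C_p\le(\tfrac12+\varepsilon)\mathsf{C}_{\rm cs,iid}$.
   Context: Diamond network: nodes $[0:N+1]$, source $0$, destination $N+1$, relays $[1:N]$; the only links are $(0,p)$ and $(p,N+1)$ for $p\in[1:N]$, with positive rational capacities $\ell_{p,0}$ and $\ell_{N+1,p}$; all other $\ell_{j,i}=0$. $\mathsf C_p=\min\{\ell_{p,0},\ell_{N+1,p}\}$ in FD and $\mathsf C_p=\frac{\ell_{p,0}\ell_{N+1,p}}{\ell_{p,0}+\ell_{N+1,p}}$ in HD. Network states: a state $s$ consists of sets $s_{i,t}\subseteq[1:N+1]\setminus\{i\}$ and $s_{i,r}\subseteq[0:N]\setminus\{i\}$, each of cardinality at most $1$, for $i\in[0:N+1]$, with $s_{0,r}=s_{N+1,t}=\emptyset$; in HD mode additionally $|s_{i,t}|+|s_{i,r}|\le1$ for $i\in[1:N]$. $\mathcal S$ is the set of all states of the mode. Link $(i,j)$ is active in $s$ if $j\in s_{i,t}$ and $i\in s_{j,r}$. $\mathsf{C}_{\rm cs,iid}=\max_{\lambda}\min_{\Omega}\sum_{i\in\Omega,\ j\in\Omega^c}\big(\sum_{s\in\mathcal S:\ (i,j)\text{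 active in }s}\lambda_s\big)\ell_{j,i}$, maximum over probability vectors $(\lambda_s)_{s\in\mathcal S}$, minimum over $\Omega$ with $0\in\Omega\subseteq[0:N]$, $\Omega^c=[0:N+1]\setminus\Omega$. *)

(* Defs.v *)
From HB Require Import structures.
From mathcomp Require Import all_boot all_order all_algebra.
Set Implicit Arguments. Unset Strict Implicit. Unset Printing Implicit Defensive.
Import Order.TTheory GRing.Theory Num.Theory.
Local Open Scope ring_scope.

(* Nodes of the N-relay diamond are 'I_(N.+2) = [0 : N+1];
   source 0 = ord0, destination N+1 = ord_max, relays 1..N.
   The network is given by a p = l_{p,0} (source -> relay p) and
   b p = l_{N+1,p} (relay p -> destination), for p in [1:N]. *)

Section Diamond.
Variable N : nat.
Notation node := 'I_N.+2.

Definition src : node := ord0.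
Definition dst : node := ord_max.
Definition is_relay (i : node) : bool := (0 < i)%N && (i <= N)%N.

(* ell a b j i = l_{j,i}: capacity of the link from i to j. *)
Definition ell (a b : nat -> rat) (j i : node) : rat :=
  if (i == src) && is_relay j then a j
  else if is_relay i && (j == dst) then b i
  else 0.

(* A network state: for every node i, the pair (s_{i,t}, s_{i,r}). *)
Definition state := {ffun node -> {set node} * {set node}}.
Definition stx (s : state) (i : node) : {set node} := (s i).1.
Definition srx (s : state) (i : node) : {set node} := (s i).2.

(* Valid states of the mode (hd = true: half duplex, false: full duplex). *)
Definition valid_state (hd : bool) (s : state) : bool :=
  [forall i : node,
    [&& #|stx s i| <= 1, #|srx s i| <= 1,
        i \notin stx s i, i \notin srx s i,
        src \notin stx s i, dst \notin srx s i &
        (hd && is_relay i) ==> (#|stx s i| + #|srx s i| <= 1)]%N]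
  && (srx s src == set0) && (stx s dst == set0).

Definition active (s : state) (i j : node) : bool :=
  (j \in stx s i) && (i \in srx s j).

Definition prob_vec (hd : bool) (lam : state -> rat) : Prop :=
  (forall s, valid_state hd s -> 0 <= lam s) /\
  \sum_(s | valid_state hd s) lam s = 1.

Definition is_cut (Om : {set node}) : bool := (src \in Om) && (dst \notin Om).

Definition cut_value hd (a b : nat -> rat) (lam : state -> rat) (Om : {set node}) : rat :=
  \sum_(i in Om) \sum_(j in ~: Om)
     (\sum_(s | valid_state hd s && active s i j) lam s) * ell a b j i.

(* min over cuts Omega (a nonempty finite family: [set src] is a cut) *)
Definition min_cut hd a b lam : rat :=
  \big[Num.min/cut_value hd a b lam [set src]]_(Om | is_cut Om) cut_value hd a b lam Om.

(* C is the value C_cs,iid = max_lambda min_Omega (...) *)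
Definition is_Ccs (hd : bool) (a b : nat -> rat) (C : rat) : Prop :=
  (exists lam, prob_vec hd lam /\ min_cut hd a b lam = C) /\
  (forall lam, prob_vec hd lam -> min_cut hd a b lam <= C).

End Diamond.

Definition Cp (hd : bool) (a b : nat -> rat) (p : nat) : rat :=
  if hd then a p * b p / (a p + b p) else Num.min (a p) (b p).

Definition maxCp (hd : bool) (N : nat) (a b : nat -> rat) : rat :=
  \big[Num.max/0]_(1 <= p < N.+1) Cp hd a b p.

Definition diamond_caps (N : nat) (a b : nat -> rat) : Prop :=
  forall p, (0 < p <= N)%N -> 0 < a p /\ 0 < b p.

(* Main.v *)
Require Import Defs.
From HB Require Import structures.
From mathcomp Require Import all_boot all_order all_algebra.
From mathcomp Require Import ring lra.
Set Implicit Arguments. Unset Strict Implicit. Unset Printing Implicit Defensive.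
Import Order.TTheory GRing.Theory Num.Theory.
Local Open Scope ring_scope.

Definition W N hd (lam : state N -> rat) (i j : 'I_N.+2) : rat :=
  \sum_(s | valid_state hd s && active s i j) lam s.

Lemma src_not_relay N : is_relay (src N) = false.
Proof. by []. Qed.
Lemma dst_not_relay N : is_relay (dst N) = false.
Proof. by rewrite /is_relay /dst /= ltnn. Qed.
Lemma src_neq_dst N : (src N) != (dst N).
Proof. by []. Qed.

Lemma cut_formula N hd a b lam (Om : {set 'I_N.+2}) : is_cut Om ->
  cut_value hd a b lam Om =
  \sum_(j | is_relay j) (if j \in Om then W hd lam j (dst N) * b j else W hd lam (src N) j * a j).
Proof.
move=> /andP[sO dO].
rewrite /cut_value (bigD1 (src N)) //=.
have -> : \sum_(i in Om | i != (src N)) \sum_(j in ~: Om)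
   (\sum_(s | valid_state hd s && active s i j) lam s) * ell a b j i
   = \sum_(i | is_relay i && (i \in Om)) W hd lam i (dst N) * b i.
  rewrite [RHS]big_mkcond [LHS]big_mkcond; apply: eq_bigr => i _.
  case: ifP => [/andP[iO isrc]|].
    rewrite (bigD1 (dst N)) ?inE //= [X in _ + X]big1 ?addr0.
      rewrite /ell (negbTE isrc) /= eqxx andbT iO andbT.
      by case: ifP => _; rewrite ?mulr0.
    move=> j /andP[_ jd]; rewrite /ell (negbTE isrc) /= (negbTE jd) andbF mulr0 //.
  move=> h; case: ifP => // /andP[ir iO]; exfalso; move: h; rewrite iO /=.
  by move/negbFE/eqP => e; rewrite e src_not_relay in ir.
rewrite [RHS](bigID (fun j => j \in Om)) /= addrC; congr (_ + _).
  by apply: eq_bigr => j /andP[_ jO]; rewrite jO.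
rewrite [RHS]big_mkcond [LHS]big_mkcond; apply: eq_bigr => j _.
rewrite /ell eqxx /= inE.
by case: (is_relay j); case: (j \in Om) => //=; rewrite mulr0.
Qed.

Lemma W_ge0 N hd lam (i j : 'I_N.+2) : prob_vec hd lam -> 0 <= W hd lam i j.
Proof. by move=> [H _]; apply: sumr_ge0 => s /andP[v _]; apply: H. Qed.

Lemma valid_at N hd (s : state N) i : valid_state hd s ->
  [&& #|stx s i| <= 1, #|srx s i| <= 1,
        i \notin stx s i, i \notin srx s i,
        src N \notin stx s i, dst N \notin srx s i &
        (hd && is_relay i) ==> (#|stx s i| + #|srx s i| <= 1)]%N.
Proof. by move=> /andP[/andP[/forallP H _] _]; apply: H. Qed.

Lemma card_le1_sum N (A : {set 'I_N.+2}) (P : pred 'I_N.+2) (c : rat) :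
  (#|A| <= 1)%N -> 0 <= c -> (forall j, P j -> j \in A) ->
  \sum_(j | P j) c <= c.
Proof.
move=> hA hc hP.
apply: (@le_trans _ _ (\sum_(j in A) c)).
  rewrite [leRHS]big_mkcond [leLHS]big_mkcond /=; apply: ler_sum => j _.
  case: ifP => Pj; first by rewrite (hP _ Pj).
  by case: ifP.
rewrite sumr_const.
move: hA; case: #|A| => [|[|//]] _; by rewrite ?mulr0n ?mulr1n.
Qed.

Lemma sum_src_le1 N hd lam : prob_vec hd lam ->
  \sum_(j | is_relay j) W hd lam (src N) j <= 1.
Proof.
move=> [H1 H2]; rewrite /W.
rewrite (exchange_big_dep (fun s => valid_state hd s)) /=; last by move=> j s _ /andP[].
rewrite -H2; apply: ler_sum => s v.
apply: (@card_le1_sum _ (stx s (src N))); last 2 first.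
- exact: H1 v.
- by move=> j /and3P[_ _ /andP[]].
by case/and5P: (valid_at (src N) v) => [h _ _ _ _].
Qed.

Lemma sum_dst_le1 N hd lam : prob_vec hd lam ->
  \sum_(j | is_relay j) W hd lam j (dst N) <= 1.
Proof.
move=> [H1 H2]; rewrite /W.
rewrite (exchange_big_dep (fun s => valid_state hd s)) /=; last by move=> j s _ /andP[].
rewrite -H2; apply: ler_sum => s v.
apply: (@card_le1_sum _ (srx s (dst N))); last 2 first.
- exact: H1 v.
- by move=> j /and3P[_ _ /andP[]].
by case/and5P: (valid_at (dst N) v) => [_ h _ _ _].
Qed.

Lemma pw (hd : bool) (x y a b : rat) : 0 <= x -> 0 <= y -> 0 < a -> 0 < b ->
  (if y * b <= x * a then y * b else x * a) <=
  (if hd then a * b / (a + b) else Num.min a b) * (x + y).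
Proof.
move=> hx hy ha hb; case: hd.
  have hab : 0 < a + b by lra.
  rewrite mulrAC ler_pdivlMr //.
  case: ifP => h; nra.
case: (leP a b) => h; case: ifP => h2; nra.
Qed.

Lemma Cp_le_max hd N a b (j : nat) : (0 < j <= N)%N -> Cp hd a b j <= maxCp hd N a b.
Proof.
move=> hj; rewrite /maxCp.
apply: le_bigmax_seq => //.
by rewrite mem_index_iota ltnS.
Qed.

Lemma maxCp_ge0 hd N a b : 0 <= maxCp hd N a b.
Proof. exact: bigmax_ge_id. Qed.

Lemma part1 hd N a b (lam : state N -> rat) : diamond_caps N a b -> prob_vec hd lam ->
  min_cut hd a b lam <= 2 * maxCp hd N a b.
Proof.
move=> hc hp.
set M := maxCp hd N a b.
pose Om := src N |: [set j | is_relay j && (W hd lam j (dst N) * b j <= W hd lam (src N) j * a j)].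
have cOm : is_cut Om.
  by rewrite /is_cut /Om !inE eqxx /= dst_not_relay.
apply: le_trans; first by rewrite /min_cut; apply: bigmin_le_cond cOm.
rewrite cut_formula //.
apply: (@le_trans _ _ (\sum_(j | is_relay j) M * (W hd lam (src N) j + W hd lam j (dst N)))).
  apply: ler_sum => j jr.
  have jn : j != src N by apply/negP => /eqP e; rewrite e src_not_relay in jr.
  have [ha hb] : 0 < a j /\ 0 < b j by apply: hc.
  have -> : (j \in Om) = (W hd lam j (dst N) * b j <= W hd lam (src N) j * a j).
    by rewrite /Om !inE (negbTE jn) jr.
  apply: (le_trans (pw hd (W_ge0 _ _ hp) (W_ge0 _ _ hp) ha hb)).
  apply: ler_wpM2r; first by apply: addr_ge0; apply: W_ge0.
  exact: (Cp_le_max hd a b jr).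
rewrite -mulr_sumr big_split /=.
have := sum_src_le1 hp; have := sum_dst_le1 hp; have := maxCp_ge0 hd N a b.
rewrite -/M => h1 h2 h3; nra.
Qed.

Definition n0 : 'I_4 := @Ordinal 4 0 isT.
Definition n1 : 'I_4 := @Ordinal 4 1 isT.
Definition n2 : 'I_4 := @Ordinal 4 2 isT.
Definition n3 : 'I_4 := @Ordinal 4 3 isT.

Definition s1 : state 2 := [ffun i => if i == n0 then ([set n2], set0)
  else if i == n1 then ([set n3], set0) else if i == n2 then (set0, [set n0])
  else (set0, [set n1])].
Definition s2 : state 2 := [ffun i => if i == n0 then ([set n1], set0)
  else if i == n1 then (set0, [set n0]) else if i == n2 then ([set n3], set0)
  else (set0, [set n2])].

Lemma s1_valid hd : valid_state hd s1.
Proof.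
rewrite /valid_state /stx /srx; apply/andP; split; [apply/andP; split|].
- apply/forallP => i; rewrite ffunE.
  case: i => [[|[|[|[|//]]]] ?]; rewrite /= ?cards1 ?cards0 ?inE /= ?implybT //.
- by rewrite ffunE.
- by rewrite ffunE.
Qed.
Lemma s2_valid hd : valid_state hd s2.
Proof.
rewrite /valid_state /stx /srx; apply/andP; split; [apply/andP; split|].
- apply/forallP => i; rewrite ffunE.
  case: i => [[|[|[|[|//]]]] ?]; rewrite /= ?cards1 ?cards0 ?inE /= ?implybT //.
- by rewrite ffunE.
- by rewrite ffunE.
Qed.
Lemma s12 : s1 != s2.
Proof.
apply/eqP => /(congr1 (fun f : state 2 => n2 \in (f n0).1)).
by rewrite !ffunE /= !inE.
Qed.

Definition lamx (t : rat) : state 2 -> rat :=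
  fun s => if s == s1 then 1 - t else if s == s2 then t else 0.

Lemma sum_lam hd t (P : pred (state 2)) :
  \sum_(s | valid_state hd s && P s) lamx t s =
  (if P s1 then 1 - t else 0) + (if P s2 then t else 0).
Proof.
rewrite big_mkcond (bigD1 s1) //= (bigD1 s2) //=; last by rewrite eq_sym s12.
rewrite big1 ?addr0 ?addrA.
  by rewrite !s1_valid !s2_valid /lamx eqxx eq_sym (negbTE s12) eqxx.
move=> s /andP[h1 h2]; rewrite /lamx (negbTE h1) (negbTE h2).
by case: ifP.
Qed.

Lemma sum_relay2 (F : 'I_4 -> rat) : \sum_(j | is_relay j) F j = F n1 + F n2.
Proof.
rewrite (bigD1 n1) // (bigD1 n2) //= big1 ?addr0 //.
by case => [[|[|[|[|]]]] ?] //=.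
Qed.

Lemma W_vals hd t :
  [/\ W hd (lamx t) (src 2) n1 = t, W hd (lamx t) (src 2) n2 = 1 - t,
      W hd (lamx t) n1 (dst 2) = 1 - t & W hd (lamx t) n2 (dst 2) = t].
Proof.
rewrite /W !sum_lam /active /stx /srx !ffunE /= !inE /=.
by rewrite !addr0 !add0r.
Qed.

Lemma cut12 hd (lam : state 2 -> rat) (a b : nat -> rat) (Om : {set 'I_4}) :
  is_cut Om -> cut_value hd a b lam Om =
  (if n1 \in Om then W hd lam n1 (dst 2) * b 1%N else W hd lam (src 2) n1 * a 1%N) +
  (if n2 \in Om then W hd lam n2 (dst 2) * b 2%N else W hd lam (src 2) n2 * a 2%N).
Proof. by move=> h; rewrite cut_formula // sum_relay2. Qed.

Lemma part2 hd eps : 0 < eps ->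
  exists a b : nat -> rat, diamond_caps 2 a b /\
    exists C : rat, is_Ccs 2 hd a b C /\ maxCp hd 2 a b <= (1/2 + eps) * C.
Proof.
move=> he.
set A := 1 + eps^-1.
have hA : 1 <= A by rewrite /A lerDl invr_ge0 ltW.
have hAe : eps * A = eps + 1 by rewrite /A mulrDr mulr1 mulfV // gt_eqF.
have hA1 : 0 < A + 1 by lra.
set i1 := (A + 1)^-1.
have hi1 : (A + 1) * i1 = 1 by rewrite mulfV // gt_eqF.
have hi1p : 0 < i1 by rewrite invr_gt0.
have hi1q : A * i1 + i1 = 1 by rewrite -hi1; ring.
pose a := fun p : nat => if p == 1%N then A else 1.
pose b := fun p : nat => if p == 2%N then A else 1.
exists a, b; split.
  by move=> p _; rewrite /a /b; split; case: ifP => _; lra.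
exists (2 * A * i1).
have hub : forall lam : state 2 -> rat, prob_vec hd lam -> min_cut hd a b lam <= 2 * A * i1.
  move=> lam hp.
  have c1 : is_cut [set n0; n1] by rewrite /is_cut !inE.
  have c2 : is_cut [set n0; n2] by rewrite /is_cut !inE.
  have m1 := bigmin_le_cond (cut_value hd a b lam [set src 2]) (cut_value hd a b lam) c1.
  have m2 := bigmin_le_cond (cut_value hd a b lam [set src 2]) (cut_value hd a b lam) c2.
  rewrite -/(min_cut _ _ _ _) cut12 // in m1.
  rewrite -/(min_cut _ _ _ _) cut12 // in m2.
  move: m1 m2; rewrite !inE /a /b /=.
  have := sum_src_le1 hp; have := sum_dst_le1 hp; rewrite !sum_relay2.
  have := W_ge0 (src 2) n1 hp; have := W_ge0 (src 2) n2 hp.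
  have := W_ge0 n1 (dst 2) hp; have := W_ge0 n2 (dst 2) hp.
  move=> *; nra.
have hW := W_vals hd i1.
case: hW => w1 w2 w3 w4.
have hpv : prob_vec hd (lamx i1).
  split.
    move=> s _; rewrite /lamx; case: ifP => _; first by nra.
    by case: ifP => _; lra.
  rewrite (eq_bigl (fun s => valid_state hd s && predT s)); last by move=> s; rewrite andbT.
  by rewrite sum_lam /= subrK.
split; first split.
- exists (lamx i1); split => //.
  apply: le_anti; rewrite hub //=.
  have hc : forall Om, is_cut Om -> 2 * A * i1 <= cut_value hd a b (lamx i1) Om.
    move=> Om hOm; rewrite cut12 // w1 w2 w3 w4 /a /b /=.
    by case: (n1 \in Om); case: (n2 \in Om); lra.
  apply: le_bigmin; first by apply: hc; rewrite /is_cut !inE.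
  exact: hc.
- exact: hub.
have hAi : A * i1 + i1 = 1 := hi1q.
apply: bigmax_le; first by nra.
move=> p _.
case: (eqVneq p 1%N) => [->|h1]; [| case: (eqVneq p 2%N) => [->|h2]].
- rewrite /Cp /a /b /=; destruct hd.
    rewrite mulr1 -/i1; nra.
  by rewrite ge_min; apply/orP; right; nra.
- rewrite /Cp /a /b /=; destruct hd.
    rewrite mul1r [1 + A]addrC -/i1; nra.
  by rewrite ge_min; apply/orP; left; nra.
- rewrite /Cp /a /b /= (negbTE h1) (negbTE h2); destruct hd.
    rewrite mul1r; nra.
  by rewrite ge_min; apply/orP; left; nra.
Qed.

Theorem lemma5 :
  (forall (hd : bool) (N : nat) (a b : nat -> rat),
      (0 < N)%N -> diamond_caps N a b ->
      forall C : rat, is_Ccs N hd a b C -> C / 2 <= maxCp hd N a b)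
  /\
  (forall (hd : bool) (eps : rat), 0 < eps ->
      exists a b : nat -> rat, diamond_caps 2 a b /\
        exists C : rat, is_Ccs 2 hd a b C /\ maxCp hd 2 a b <= (1/2 + eps) * C).
Proof.
split.
  move=> hd N a b _ hc C [[lam [hp <-]] _].
  have := part1 hc hp; lra.
exact: part2.
Qed.
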